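(* Let $\mathfrak a_{1.3}$ be the Lie algebra of vector fields on $\mathbb R^3$ with coordinates $(z_1,z_2,w)$ spanned by \[ P^1=\partial_{z_1},\quad D^1=z_1\partial_{z_1}-w\partial_w,\quad K=z_1^2\partial_{z_1}+z_1z_2\partial_{z_2}+\big(z_1w+\tfrac16z_2^{3}\big)\partial_w, \] \[ D^2=z_2\partial_{z_2}+3w\partial_w,\quad P^2=\partial_{z_2},\quad H=z_1\partial_{z_2}+\tfrac12z_2^{2}\partial_w,\quad R(\alpha)=\alpha(z_1)z_2\partial_w,\quad Z(\sigma)=\sigma(z_1)\partial_w, \] where $\alpha$ and $\sigma$ run through the set of smooth functions of $z_1$. Then the radical (the maximal solvable ideal) $\mathfrak r$ of $\mathfrak a_{1.3}$ coincides with $\big\langle D^2,\,P^2,\,H,\,R(\alpha),\,Z(\sigma)\big\rangle$, the span of $D^2$, $P^2$, $H$ and all $R(\alpha)$, $Z(\sigma)$.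
   Context: $\mathfrak a_{1.3}$ is the maximal Lie invariance (pseudo)algebra of the partial differential equation $w_{122}+w_{22}w_{222}=0$ for $w=w(z_1,z_2)$, where subscripts $1,2$ denote differentiation with respect to $z_1,z_2$. The bracket is the Lie bracket of vector fields. *)

(* Defs.v *)
From HB Require Import structures.
From mathcomp Require Import all_boot all_order all_algebra.
From mathcomp Require Import all_classical all_reals all_analysis.
Set Implicit Arguments. Unset Strict Implicit. Unset Printing Implicit Defensive.
Import Order.TTheory GRing.Theory Num.Theory.
Local Open Scope ring_scope.
Local Open Scope classical_set_scope.

Section VF.
Variable R : realType.

(* A vector field on R^3 with coordinates (z1,z2,w): component i
   (i = 0 : d/dz1, i = 1 : d/dz2, i = 2 : d/dw) as a function of (z1,z2,w). *)
Definition vf := 'I_3 -> R -> R -> R -> R.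

Definition mkvf (f1 f2 f3 : R -> R -> R -> R) : vf :=
  fun i => if val i == 0%N then f1 else if val i == 1%N then f2 else f3.

Definition vf0 : vf := fun _ _ _ _ => 0.

Definition pd (j : 'I_3) (f : R -> R -> R -> R) (a b c : R) : R :=
  if val j == 0%N then derive1 (fun t => f t b c) a
  else if val j == 1%N then derive1 (fun t => f a t c) b
  else derive1 (fun t => f a b t) c.

Definition lie (X Y : vf) : vf := fun i a b c =>
  \sum_(j < 3) (X j a b c * pd j (Y i) a b c - Y j a b c * pd j (X i) a b c).

Definition smooth (f : R -> R) : Prop :=
  forall (n : nat) (x : R), derivable (derive1n n f) x 1.

Definition span (S : set vf) : set vf :=
  [set X | exists l : seq (R * vf), (forall p, p \in l -> S p.2) /\
     X = (fun i a b c => \sum_(p <- l) p.1 * p.2 i a b c)].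

Definition subspace (I : set vf) : Prop :=
  I vf0 /\ forall (c : R) (X Y : vf), I X -> I Y ->
    I (fun i a b d => c * X i a b d + Y i a b d).

Definition is_ideal (A I : set vf) : Prop :=
  subspace I /\ I `<=` A /\ forall X Y, A X -> I Y -> I (lie X Y).

Fixpoint derived (I : set vf) (k : nat) : set vf :=
  match k with
  | 0%N => I
  | k'.+1 => span [set Z | exists X Y, derived I k' X /\ derived I k' Y /\ Z = lie X Y]
  end.

Definition solvable (I : set vf) : Prop :=
  exists k, derived I k `<=` [set vf0].

Definition P1 : vf := mkvf (fun _ _ _ => 1) (fun _ _ _ => 0) (fun _ _ _ => 0).
Definition D1 : vf := mkvf (fun z1 _ _ => z1) (fun _ _ _ => 0) (fun _ _ w => - w).
Definition Kf : vf := mkvf (fun z1 _ _ => z1 ^+ 2) (fun z1 z2 _ => z1 * z2)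
  (fun z1 z2 w => z1 * w + z2 ^+ 3 / 6).
Definition D2 : vf := mkvf (fun _ _ _ => 0) (fun _ z2 _ => z2) (fun _ _ w => 3 * w).
Definition P2 : vf := mkvf (fun _ _ _ => 0) (fun _ _ _ => 1) (fun _ _ _ => 0).
Definition Hf : vf := mkvf (fun _ _ _ => 0) (fun z1 _ _ => z1) (fun _ z2 _ => z2 ^+ 2 / 2).
Definition Rf (al : R -> R) : vf :=
  mkvf (fun _ _ _ => 0) (fun _ _ _ => 0) (fun z1 z2 _ => al z1 * z2).
Definition Zf (s : R -> R) : vf :=
  mkvf (fun _ _ _ => 0) (fun _ _ _ => 0) (fun z1 _ _ => s z1).

Definition gen_r : set vf :=
  [set X | X = D2 \/ X = P2 \/ X = Hf \/
           (exists al, smooth al /\ X = Rf al) \/ (exists s, smooth s /\ X = Zf s)].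

Definition gen_a : set vf :=
  [set X | X = P1 \/ X = D1 \/ X = Kf \/ gen_r X].

Definition a13 : set vf := span gen_a.
Definition r13 : set vf := span gen_r.

Definition is_radical (A I : set vf) : Prop :=
  is_ideal A I /\ solvable I /\ forall J, is_ideal A J -> solvable J -> J `<=` I.

End VF.

(* Main.v *)
Require Import Defs.
From HB Require Import structures.
From mathcomp Require Import all_boot all_order all_algebra.
From mathcomp Require Import all_classical all_reals all_analysis.
From mathcomp Require Import ring.
Set Implicit Arguments. Unset Strict Implicit. Unset Printing Implicit Defensive.
Import Order.TTheory GRing.Theory Num.Theory.
Local Open Scope ring_scope.
Local Open Scope classical_set_scope.

Section S.
Variable R : realType.
Implicit Types f g : R -> R.

Lemma der_add f g x : derivable f x 1 -> derivable g x 1 ->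
  derive1 (fun t => f t + g t) x = derive1 f x + derive1 g x.
Proof.
move=> df dg; rewrite derive1E (_ : (fun t => f t + g t) = f + g); last by [].
rewrite (deriveD df dg). by rewrite -!derive1E.
Qed.

Lemma dble_add f g x : derivable f x 1 -> derivable g x 1 ->
  derivable (fun t => f t + g t) x 1.
Proof. move=> df dg; exact: (derivableD df dg). Qed.

Lemma dble_scal k f x : derivable f x 1 -> derivable (fun t => k * f t) x 1.
Proof.
move=> df; exact: (derivableM (derivable_cst k x 1) df).
Qed.

Lemma dble_X f x : derivable f x 1 -> derivable (fun t : R => t * f t) x 1.
Proof.
move=> df; exact: (derivableM (@derivable_id _ R^o x 1) df).
Qed.

Lemma der_scal k f x : derivable f x 1 ->
  derive1 (fun t => k * f t) x = k * derive1 f x.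
Proof. move=> df; exact: derive1Ml. Qed.

Ltac hE := rewrite ?(hornerD, hornerZ, hornerM, hornerX, hornerC).

Lemma d1_gen (g h1 h2 : R -> R) (A B C D E x : R) :
  derivable h1 x 1 -> derivable h2 x 1 ->
  (forall t, g t = A + B*t + C*t^+2 + D*t^+3 + E * h1 t + h2 t) ->
  derive1 g x = B + 2*C*x + 3*D*x^+2 + E * derive1 h1 x + derive1 h2 x.
Proof.
move=> d1 d2 H.
pose p : {poly R} := A%:P + B *: 'X + C *: ('X * 'X) + D *: ('X * 'X * 'X).
have Hp : forall t, p.[t] = A + B*t + C*t^+2 + D*t^+3.
  by move=> t; rewrite /p; hE; ring.
have -> : g = (fun t => p.[t] + (E * h1 t + h2 t)).
  by apply/funext => t; rewrite H Hp; ring.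
have dp : derivable (horner p) x 1 by apply: derivable_horner.
rewrite (der_add (f := horner p) (g := fun t => E * h1 t + h2 t) dp (dble_add (dble_scal (k:=E) d1) d2)).
rewrite (der_add (dble_scal (k:=E) d1) d2) (der_scal E d1).
rewrite -derivE.
have -> : p^`().[x] = B + 2*C*x + 3*D*x^+2.
  rewrite /p !(derivD, derivZ, derivM, derivX, derivC); hE; ring.
ring.
Qed.

Lemma der_X f x : derivable f x 1 ->
  derive1 (fun t : R => t * f t) x = f x + x * derive1 f x.
Proof.
move=> df; rewrite derive1E (_ : (fun t : R => t * f t) = id * f); last by [].
rewrite (deriveM (@derivable_id _ R^o x 1) df) derive_id -derive1E.
change (x * derive1 f x + f x * 1 = f x + x * derive1 f x). ring.
Qed.

Lemma smooth_der f : smooth f -> smooth (derive1 f).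
Proof. by move=> sf n x; rewrite -derive1Sn; apply: sf. Qed.

Lemma smooth_cst k : smooth (fun _ : R => k).
Proof.
have E : forall n, derive1n n (fun _ : R => k) = fun _ => (if n is 0%N then k else 0).
  elim=> [|n IH]; first by []. rewrite derive1nS IH; apply/funext => x.
  by rewrite (_ : (fun _ => _) = cst (if n is 0%N then k else 0)); [rewrite derive1_cst|].
move=> n x; rewrite E; exact: derivable_cst.
Qed.

Lemma smooth_add f g : smooth f -> smooth g -> smooth (fun t => f t + g t).
Proof.
move=> sf sg.
have E : forall n, derive1n n (fun t => f t + g t) = fun t => derive1n n f t + derive1n n g t.
  elim=> [|n IH]; first by []. rewrite derive1nS IH; apply/funext => x.
  exact: (der_add (sf n x) (sg n x)).
move=> n x; rewrite E; exact: (dble_add (sf n x) (sg n x)).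
Qed.

Lemma smooth_scal k f : smooth f -> smooth (fun t => k * f t).
Proof.
move=> sf.
have E : forall n, derive1n n (fun t => k * f t) = fun t => k * derive1n n f t.
  elim=> [|n IH]; first by []. rewrite derive1nS IH; apply/funext => x.
  exact: (der_scal k (sf n x)).
move=> n x; rewrite E; exact: (dble_scal (k:=k) (sf n x)).
Qed.

Lemma smooth_X f : smooth f -> smooth (fun t : R => t * f t).
Proof.
move=> sf.
have E : forall n, derive1n n (fun t : R => t * f t) =
   fun t => t * derive1n n f t + n%:R * derive1n n.-1 f t.
  elim=> [|n IH]; first by apply/funext => x /=; rewrite mul0r addr0.
  rewrite derive1nS IH; apply/funext => x.
  rewrite (der_add (dble_X (sf n x)) (dble_scal (k:=n%:R) (sf n.-1 x))).
  rewrite (der_X (sf n x)) (der_scal _ (sf n.-1 x)).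
  have -> : n%:R * derive1 (derive1n n.-1 f) x = n%:R * derive1n n f x.
    by case: n {IH} => [|m]; [rewrite !mul0r|].
  rewrite -derive1nS /= mulrS; ring.
move=> n x; rewrite E; exact: (dble_add (dble_X (sf n x)) (dble_scal (k:=n%:R) (sf n.-1 x))).
Qed.

Lemma d1_poly (g : R -> R) (A B C D x : R) :
  (forall t, g t = A + B*t + C*t^+2 + D*t^+3) ->
  derive1 g x = B + 2*C*x + 3*D*x^+2.
Proof.
move=> H.
have dc : derivable (fun _ : R => 0 : R) x 1 := derivable_cst 0 x 1.
rewrite (@d1_gen g (fun _ => 0) (fun _ => 0) A B C D 0 x dc dc).
  by rewrite (_ : (fun _ => 0) = cst (0:R)); [rewrite derive1_cst; ring|].
by move=> t; rewrite H; ring.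
Qed.

Definition i0 : 'I_3 := @Ordinal 3 0 isT.
Definition i1 : 'I_3 := @Ordinal 3 1 isT.
Definition i2 : 'I_3 := @Ordinal 3 2 isT.

Lemma sum3 (F : 'I_3 -> R) : \sum_(j < 3) F j = F i0 + F i1 + F i2.
Proof.
rewrite !big_ord_recl big_ord0 addr0 addrA.
by congr (F _ + F _ + F _); apply: val_inj.
Qed.

Lemma ord3 (i : 'I_3) : i = i0 \/ i = i1 \/ i = i2.
Proof.
case: i => [[|[|[|m]]] Hi]; [left|right;left|right;right|by []]; by apply: val_inj.
Qed.

Lemma pd0E (F : R -> R -> R -> R) a b c : pd i0 F a b c = derive1 (fun t => F t b c) a. Proof. by []. Qed.
Lemma pd1E (F : R -> R -> R -> R) a b c : pd i1 F a b c = derive1 (fun t => F a t c) b. Proof. by []. Qed.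
Lemma pd2E (F : R -> R -> R -> R) a b c : pd i2 F a b c = derive1 (fun t => F a b t) c. Proof. by []. Qed.
Lemma mk0 (f1 f2 f3 : R -> R -> R -> R) : mkvf f1 f2 f3 i0 = f1. Proof. by []. Qed.
Lemma mk1 (f1 f2 f3 : R -> R -> R -> R) : mkvf f1 f2 f3 i1 = f2. Proof. by []. Qed.
Lemma mk2 (f1 f2 f3 : R -> R -> R -> R) : mkvf f1 f2 f3 i2 = f3. Proof. by []. Qed.
End S.

Section S.
Variable R : realType.

Definition shp (a b c d u v : R) (al s : R -> R) : vf R :=
  mkvf (fun x _ _ => a + b*x + c*x^+2) (fun x y _ => c*x*y + d*y + u + v*x)
    (fun x y w => (c*x - b + 3*d)*w + c*y^+3/6 + v*y^+2/2 + al x * y + s x).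

Section PD.
Variables (a b c d u v : R) (al s : R -> R).
Let X := shp a b c d u v al s.
Lemma pd00 x y w : pd i0 (X i0) x y w = b + 2*c*x.
Proof. rewrite pd0E /X /shp mk0 (d1_poly (A:=a) (B:=b) (C:=c) (D:=0)); [ring|move=> t; ring]. Qed.
Lemma pd10 x y w : pd i1 (X i0) x y w = 0.
Proof. rewrite pd1E /X /shp mk0 (d1_poly (A:=a + b*x + c*x^+2) (B:=0) (C:=0) (D:=0)); [ring|move=> t; ring]. Qed.
Lemma pd20 x y w : pd i2 (X i0) x y w = 0.
Proof. rewrite pd2E /X /shp mk0 (d1_poly (A:=a + b*x + c*x^+2) (B:=0) (C:=0) (D:=0)); [ring|move=> t; ring]. Qed.
Lemma pd01 x y w : pd i0 (X i1) x y w = c*y + v.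
Proof. rewrite pd0E /X /shp mk1 (d1_poly (A:=d*y+u) (B:=c*y+v) (C:=0) (D:=0)); [ring|move=> t; ring]. Qed.
Lemma pd11 x y w : pd i1 (X i1) x y w = c*x + d.
Proof. rewrite pd1E /X /shp mk1 (d1_poly (A:=u+v*x) (B:=c*x+d) (C:=0) (D:=0)); [ring|move=> t; ring]. Qed.
Lemma pd21 x y w : pd i2 (X i1) x y w = 0.
Proof. rewrite pd2E /X /shp mk1 (d1_poly (A:=c*x*y + d*y + u + v*x) (B:=0) (C:=0) (D:=0)); [ring|move=> t; ring]. Qed.
Lemma pd12 x y w : pd i1 (X i2) x y w = c*y^+2/2 + v*y + al x.
Proof. rewrite pd1E /X /shp mk2 (d1_poly (A:=(c*x - b + 3*d)*w + s x) (B:=al x) (C:=v/2) (D:=c/6)); [field; rewrite ?pnatr_eq0 //|move=> t; ring]. Qed.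
Lemma pd22 x y w : pd i2 (X i2) x y w = c*x - b + 3*d.
Proof. rewrite pd2E /X /shp mk2 (d1_poly (A:=c*y^+3/6 + v*y^+2/2 + al x * y + s x) (B:=c*x - b + 3*d) (C:=0) (D:=0)); [ring|move=> t; ring]. Qed.
Lemma pd02 x y w : derivable al x 1 -> derivable s x 1 ->
  pd i0 (X i2) x y w = c*w + derive1 al x * y + derive1 s x.
Proof.
move=> da ds.
rewrite pd0E /X /shp mk2 (d1_gen (h1:=al) (h2:=s) (A:=(-b+3*d)*w + c*y^+3/6 + v*y^+2/2) (B:=c*w) (C:=0) (D:=0) (E:=y) da ds); [ring|move=> t; ring].
Qed.
End PD.

Definition fadd (f g : R -> R) := fun t => f t + g t.
Definition fscal (k : R) (f : R -> R) := fun t => k * f t.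
Definition fX (f : R -> R) := fun t : R => t * f t.
Definition fcst (k : R) := fun _ : R => k.

Lemma fadd_s f g : smooth f -> smooth g -> smooth (fadd f g). Proof. exact: smooth_add. Qed.
Lemma fscal_s k f : smooth f -> smooth (fscal k f). Proof. exact: smooth_scal. Qed.
Lemma fX_s f : smooth f -> smooth (fX f). Proof. exact: smooth_X. Qed.
Lemma fcst_s k : smooth (fcst k). Proof. exact: smooth_cst. Qed.

Definition AL (a b c d u v d' u' v' : R) (al be : R -> R) : R -> R :=
  fadd (fscal a (derive1 be)) (fadd (fscal b (fX (derive1 be))) (fadd (fscal c (fX (fX (derive1 be))))
   (fadd (fscal (b - 2*d) be) (fadd (fscal (2*d') al) (fcst (u*v' - u'*v)))))).
Definition SG (a b c d u v d' u' v' : R) (al s be ta : R -> R) : R -> R :=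
  fadd (fscal a (derive1 ta)) (fadd (fscal b (fX (derive1 ta))) (fadd (fscal c (fX (fX (derive1 ta))))
   (fadd (fscal u be) (fadd (fscal v (fX be)) (fadd (fscal (3*d') s) (fadd (fscal (-u') al)
   (fadd (fscal (-v') (fX al)) (fadd (fscal (-c) (fX ta)) (fscal (b - 3*d) ta))))))))).

Ltac smt := repeat match goal with
 | |- smooth (fadd _ _) => apply: fadd_s
 | |- smooth (fscal _ _) => apply: fscal_s
 | |- smooth (fX _) => apply: fX_s
 | |- smooth (fcst _) => apply: fcst_s
 | |- smooth (derive1 _) => apply: smooth_der
 | H : smooth ?f |- smooth ?f => exact H end.

Lemma AL_smooth a b c d u v d' u' v' al be : smooth al -> smooth be ->
  smooth (AL a b c d u v d' u' v' al be).
Proof. move=> *; rewrite /AL; smt. Qed.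
Lemma SG_smooth a b c d u v d' u' v' al s be ta : smooth al -> smooth s -> smooth be -> smooth ta ->
  smooth (SG a b c d u v d' u' v' al s be ta).
Proof. move=> *; rewrite /SG; smt. Qed.

Lemma lie_shp a b c d u v d' u' v' al s be ta :
  smooth al -> smooth s -> smooth be -> smooth ta ->
  lie (shp a b c d u v al s) (shp 0 0 0 d' u' v' be ta) =
  shp 0 0 0 0 (a*v' + u*d' - d*u') (b*v' + v*d' - c*u' - d*v')
    (AL a b c d u v d' u' v' al be) (SG a b c d u v d' u' v' al s be ta).
Proof.
move=> sal ss sbe sta.
apply/funext=> i; apply/funext=> x; apply/funext=> y; apply/funext=> w.
rewrite /lie sum3.
have da : derivable al x 1 := sal 0%N x.
have ds : derivable s x 1 := ss 0%N x.
have db : derivable be x 1 := sbe 0%N x.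
have dt : derivable ta x 1 := sta 0%N x.
case: (ord3 i) => [->|[->|->]]; rewrite ?(pd00, pd10, pd20, pd01, pd11, pd21, pd12, pd22, pd02 _ _ _ _ _ _ _ _ da ds, pd02 _ _ _ _ _ _ _ _ db dt) /shp !(mk0, mk1, mk2) /AL /SG /fadd /fscal /fX /fcst; cbv beta.
- ring.
- ring.
- field; rewrite ?pnatr_eq0 //.
Qed.
End S.

Section S.
Variable R : realType.
Implicit Types X Y : vf R.

Ltac ext3 := let i := fresh "i" in let x := fresh "x" in let y := fresh "y" in let w := fresh "w" in
  apply/funext=> i; apply/funext=> x; apply/funext=> y; apply/funext=> w;
  case: (ord3 i) => [->|[->|->]].

Lemma span_ind (S C : set (vf R)) : C (@vf0 R) ->
  (forall k X Y, C X -> C Y -> C (fun i a b d => k * X i a b d + Y i a b d)) ->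
  S `<=` C -> Defs.span S `<=` C.
Proof.
move=> C0 Ccl SC X [l [Hl ->]].
elim: l Hl => [|p l IH] Hl.
  have -> : (fun i a b c => \sum_(p <- [::]) p.1 * p.2 i a b c) = @vf0 R.
    by apply/funext=> i; apply/funext=> a; apply/funext=> b; apply/funext=> c; rewrite big_nil.
  exact: C0.
have -> : (fun i a b c => \sum_(q <- p :: l) q.1 * q.2 i a b c) =
   (fun i a b c => p.1 * p.2 i a b c + (fun i a b c => \sum_(q <- l) q.1 * q.2 i a b c) i a b c).
  by apply/funext=> i; apply/funext=> a; apply/funext=> b; apply/funext=> c; rewrite big_cons.
apply: Ccl; first by apply: SC; apply: Hl; rewrite inE eqxx.
by apply: IH => q Hq; apply: Hl; rewrite inE Hq orbT.
Qed.

Lemma lin_shp (k a b c d u v a' b' c' d' u' v' : R) (al s al' s' : R -> R) :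
  (fun i x y w => k * shp a b c d u v al s i x y w + shp a' b' c' d' u' v' al' s' i x y w) =
  shp (k*a+a') (k*b+b') (k*c+c') (k*d+d') (k*u+u') (k*v+v') (fadd (fscal k al) al') (fadd (fscal k s) s').
Proof. ext3; rewrite /shp !(mk0, mk1, mk2) /fadd /fscal; cbv beta; ring. Qed.

Lemma shp_vf0 (a b c d u v : R) (al s : R -> R) : a = 0 -> b = 0 -> c = 0 -> d = 0 -> u = 0 -> v = 0 ->
  (forall x, al x = 0) -> (forall x, s x = 0) -> shp a b c d u v al s = @vf0 R.
Proof.
move=> -> -> -> -> -> -> Ha Hs; ext3; rewrite /shp /vf0 !(mk0, mk1, mk2) ?Ha ?Hs; ring.
Qed.

Definition ShA X := exists a b c d u v al s, smooth al /\ smooth s /\ X = shp a b c d u v al s.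
Definition Sh0 X := exists d u v al s, smooth al /\ smooth s /\ X = shp 0 0 0 d u v al s.
Definition C1 X := exists u v al s, smooth al /\ smooth s /\ X = shp 0 0 0 0 u v al s.
Definition C2 X := exists al s, smooth al /\ smooth s /\ X = shp 0 0 0 0 0 0 al s.

Lemma vf0_shp : @vf0 R = shp 0 0 0 0 0 0 (fcst 0) (fcst 0).
Proof. by rewrite shp_vf0. Qed.

Lemma ShA0 : ShA (@vf0 R).
Proof. by exists 0, 0, 0, 0, 0, 0, (fcst 0), (fcst 0); rewrite -vf0_shp; split; [apply: fcst_s|split; [apply: fcst_s|]]. Qed.
Lemma Sh00 : Sh0 (@vf0 R).
Proof. by exists 0, 0, 0, (fcst 0), (fcst 0); rewrite -vf0_shp; split; [apply: fcst_s|split; [apply: fcst_s|]]. Qed.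
Lemma C10 : C1 (@vf0 R).
Proof. by exists 0, 0, (fcst 0), (fcst 0); rewrite -vf0_shp; split; [apply: fcst_s|split; [apply: fcst_s|]]. Qed.
Lemma C20 : C2 (@vf0 R).
Proof. by exists (fcst 0), (fcst 0); rewrite -vf0_shp; split; [apply: fcst_s|split; [apply: fcst_s|]]. Qed.

Ltac lin_tac := move=> k X Y;
  repeat (let H := fresh in case=> H);
  repeat (let H := fresh in case=> H);
  idtac.

End S.

Section S.
Variable R : realType.
Implicit Types X Y : vf R.

Ltac ext3 := let i := fresh "i" in let x := fresh "x" in let y := fresh "y" in let w := fresh "w" in
  apply/funext=> i; apply/funext=> x; apply/funext=> y; apply/funext=> w;
  case: (ord3 i) => [->|[->|->]].

Lemma smooth_lin k (f g : R -> R) : smooth f -> smooth g -> smooth (fadd (fscal k f) g).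
Proof. by move=> sf sg; apply: fadd_s => //; apply: fscal_s. Qed.

Lemma ShA_cl k X Y : ShA X -> ShA Y -> ShA (fun i a b d => k * X i a b d + Y i a b d).
Proof.
move=> [a [b [c [d [u [v [al [s [sa [ss ->]]]]]]]]]] [a' [b' [c' [d' [u' [v' [al' [s' [sa' [ss' ->]]]]]]]]]].
rewrite lin_shp; do 8 eexists; split; [|split; [|reflexivity]]; exact: smooth_lin.
Qed.

Lemma Sh0_cl k X Y : Sh0 X -> Sh0 Y -> Sh0 (fun i a b d => k * X i a b d + Y i a b d).
Proof.
move=> [d [u [v [al [s [sa [ss ->]]]]]]] [d' [u' [v' [al' [s' [sa' [ss' ->]]]]]]].
rewrite lin_shp !mulr0 !addr0; do 5 eexists; split; [|split; [|reflexivity]]; exact: smooth_lin.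
Qed.

Lemma C1_cl k X Y : C1 X -> C1 Y -> C1 (fun i a b d => k * X i a b d + Y i a b d).
Proof.
move=> [u [v [al [s [sa [ss ->]]]]]] [u' [v' [al' [s' [sa' [ss' ->]]]]]].
rewrite lin_shp !mulr0 !addr0; do 4 eexists; split; [|split; [|reflexivity]]; exact: smooth_lin.
Qed.

Lemma C2_cl k X Y : C2 X -> C2 Y -> C2 (fun i a b d => k * X i a b d + Y i a b d).
Proof.
move=> [al [s [sa [ss ->]]]] [al' [s' [sa' [ss' ->]]]].
rewrite lin_shp !mulr0 !addr0; do 2 eexists; split; [|split; [|reflexivity]]; exact: smooth_lin.
Qed.

Lemma Z_cl k X Y : X = @vf0 R -> Y = @vf0 R -> (fun i a b d => k * X i a b d + Y i a b d) = @vf0 R.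
Proof.
move=> -> ->; apply/funext=> i; apply/funext=> x; apply/funext=> y; apply/funext=> w.
by rewrite /vf0 mulr0 addr0.
Qed.

Lemma fcst0_s : smooth (@fcst R 0). Proof. exact: fcst_s. Qed.

Lemma P1_shp : @P1 R = shp 1 0 0 0 0 0 (fcst 0) (fcst 0).
Proof. ext3; rewrite /P1 /shp /fcst !(mk0, mk1, mk2); ring. Qed.
Lemma D1_shp : @D1 R = shp 0 1 0 0 0 0 (fcst 0) (fcst 0).
Proof. ext3; rewrite /D1 /shp /fcst !(mk0, mk1, mk2); ring. Qed.
Lemma K_shp : @Kf R = shp 0 0 1 0 0 0 (fcst 0) (fcst 0).
Proof. ext3; rewrite /Kf /shp /fcst !(mk0, mk1, mk2); ring. Qed.
Lemma D2_shp : @D2 R = shp 0 0 0 1 0 0 (fcst 0) (fcst 0).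
Proof. ext3; rewrite /D2 /shp /fcst !(mk0, mk1, mk2); ring. Qed.
Lemma P2_shp : @P2 R = shp 0 0 0 0 1 0 (fcst 0) (fcst 0).
Proof. ext3; rewrite /P2 /shp /fcst !(mk0, mk1, mk2); ring. Qed.
Lemma H_shp : @Hf R = shp 0 0 0 0 0 1 (fcst 0) (fcst 0).
Proof. ext3; rewrite /Hf /shp /fcst !(mk0, mk1, mk2); ring. Qed.
Lemma R_shp (al : R -> R) : Rf al = shp 0 0 0 0 0 0 al (fcst 0).
Proof. ext3; rewrite /Rf /shp /fcst !(mk0, mk1, mk2); ring. Qed.
Lemma Z_shp (s : R -> R) : Zf s = shp 0 0 0 0 0 0 (fcst 0) s.
Proof. ext3; rewrite /Zf /shp /fcst !(mk0, mk1, mk2); ring. Qed.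

Lemma gen_r_Sh0 : @gen_r R `<=` @Sh0 R.
Proof.
move=> X [->|[->|[->|[[al [sa ->]]|[s [ss ->]]]]]].
- by rewrite D2_shp; do 5 eexists; split; [|split; [|reflexivity]]; exact: fcst0_s.
- by rewrite P2_shp; do 5 eexists; split; [|split; [|reflexivity]]; exact: fcst0_s.
- by rewrite H_shp; do 5 eexists; split; [|split; [|reflexivity]]; exact: fcst0_s.
- by rewrite R_shp; do 5 eexists; split; [|split; [|reflexivity]]; [exact: sa|exact: fcst0_s].
- by rewrite Z_shp; do 5 eexists; split; [|split; [|reflexivity]]; [exact: fcst0_s|exact: ss].
Qed.

Lemma Sh0_ShA X : Sh0 X -> ShA X.
Proof. by move=> [d [u [v [al [s [sa [ss ->]]]]]]]; do 8 eexists; split; [|split; [|reflexivity]]. Qed.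

Lemma gen_a_ShA : @gen_a R `<=` @ShA R.
Proof.
move=> X [->|[->|[->|/gen_r_Sh0/Sh0_ShA //]]].
- by rewrite P1_shp; do 8 eexists; split; [|split; [|reflexivity]]; exact: fcst0_s.
- by rewrite D1_shp; do 8 eexists; split; [|split; [|reflexivity]]; exact: fcst0_s.
- by rewrite K_shp; do 8 eexists; split; [|split; [|reflexivity]]; exact: fcst0_s.
Qed.

Lemma r13_Sh0 : @r13 R `<=` @Sh0 R.
Proof. apply: span_ind; [exact: Sh00|exact: Sh0_cl|exact: gen_r_Sh0]. Qed.

Lemma a13_ShA : @a13 R `<=` @ShA R.
Proof. apply: span_ind; [exact: ShA0|exact: ShA_cl|exact: gen_a_ShA]. Qed.

End S.

Section S.
Variable R : realType.
Implicit Types X Y : vf R.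

Ltac ext3 := let i := fresh "i" in let x := fresh "x" in let y := fresh "y" in let w := fresh "w" in
  apply/funext=> i; apply/funext=> x; apply/funext=> y; apply/funext=> w;
  case: (ord3 i) => [->|[->|->]].

Lemma Sh0_r13 X : Sh0 X -> @r13 R X.
Proof.
move=> [d [u [v [al [s [sa [ss ->]]]]]]].
exists [:: (d, @D2 R); (u, @P2 R); (v, @Hf R); (1, Rf al); (1, Zf s)]; split.
  move=> p; rewrite !inE.
  case/orP=> [/eqP->|]; first by left.
  case/orP=> [/eqP->|]; first by right; left.
  case/orP=> [/eqP->|]; first by right; right; left.
  case/orP=> [/eqP->|/eqP->]; first by right; right; right; left; exists al.
  by right; right; right; right; exists s.
rewrite D2_shp P2_shp H_shp R_shp Z_shp.
ext3; rewrite !big_cons big_nil; cbn [fst snd]; rewrite /shp /fcst !(mk0, mk1, mk2); ring.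
Qed.

Lemma span_mono (S T : set (vf R)) : S `<=` T -> Defs.span S `<=` Defs.span T.
Proof. by move=> ST X [l [Hl ->]]; exists l; split => // p /Hl /ST. Qed.

Lemma r13_ideal : is_ideal (@a13 R) (@r13 R).
Proof.
split; [split|split].
- exact: Sh0_r13 (@Sh00 R).
- move=> k X Y /r13_Sh0 HX /r13_Sh0 HY; apply: Sh0_r13; exact: Sh0_cl.
- apply: span_mono => X HX; by right; right; right.
- move=> X Y /a13_ShA [a [b [c [d [u [v [al [s [sa [ss ->]]]]]]]]]] /r13_Sh0 [d' [u' [v' [be [ta [sb [st ->]]]]]]].
  rewrite lie_shp //; apply: Sh0_r13; do 5 eexists; split; [|split; [|reflexivity]].
  + exact: AL_smooth.
  + exact: SG_smooth.
Qed.

Lemma der1 : derived (@r13 R) 1 `<=` @C1 R.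
Proof.
apply: span_ind; [exact: C10|exact: C1_cl|].
move=> Z [X [Y [/r13_Sh0 [d [u [v [al [s [sa [ss ->]]]]]]] [/r13_Sh0 [d' [u' [v' [be [ta [sb [st ->]]]]]]] ->]]]].
rewrite lie_shp //; do 4 eexists; split; [|split; [|reflexivity]].
+ exact: AL_smooth.
+ exact: SG_smooth.
Qed.

Lemma der2 : derived (@r13 R) 2 `<=` @C2 R.
Proof.
apply: span_ind; [exact: C20|exact: C2_cl|].
move=> Z [X [Y [/der1 [u [v [al [s [sa [ss ->]]]]]] [/der1 [u' [v' [be [ta [sb [st ->]]]]]] ->]]]].
rewrite lie_shp //; exists (AL 0 0 0 0 u v 0 u' v' al be), (SG 0 0 0 0 u v 0 u' v' al s be ta).
split; [|split; [|congr shp; ring]].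
+ exact: AL_smooth.
+ exact: SG_smooth.
Qed.

Lemma der3 : derived (@r13 R) 3 `<=` [set @vf0 R].
Proof.
apply: span_ind; [by []|move=> k X Y; exact: Z_cl|].
move=> Z [X [Y [/der2 [al [s [sa [ss ->]]]] [/der2 [be [ta [sb [st ->]]]] ->]]]].
rewrite lie_shp //; apply: shp_vf0; try ring;
  move=> x; rewrite /AL /SG /fadd /fscal /fX /fcst; ring.
Qed.

Lemma r13_solvable : solvable (@r13 R).
Proof. by exists 3%N; exact: der3. Qed.

End S.

Section S.
Variable R : realType.
Implicit Types X Y : vf R.

Definition Pi (p q r : R) X := forall x y w, X i0 x y w = p + q*x + r*x^+2.
Definition sc (k : R) X : vf R := fun i a b d => k * X i a b d + @vf0 R i a b d.

Lemma Pi_ext p q r p' q' r' X : Pi p q r X -> p = p' -> q = q' -> r = r' -> Pi p' q' r' X.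
Proof. by move=> H <- <- <-. Qed.

Lemma Pi_lie p q r p' q' r' X Y : Pi p q r X -> Pi p' q' r' Y ->
  Pi (p*q' - p'*q) (2*(p*r' - p'*r)) (q*r' - q'*r) (lie X Y).
Proof.
move=> HX HY x y w; rewrite /lie sum3.
have E0 : forall Z p q r, Pi p q r Z -> pd i0 (Z i0) x y w = q + 2*r*x.
  move=> Z p0 q0 r0 HZ; rewrite pd0E (d1_poly (A:=p0) (B:=q0) (C:=r0) (D:=0)); [ring|move=> t; rewrite HZ; ring].
have E1 : forall Z p q r, Pi p q r Z -> pd i1 (Z i0) x y w = 0.
  move=> Z p0 q0 r0 HZ; rewrite pd1E (d1_poly (A:=p0 + q0*x + r0*x^+2) (B:=0) (C:=0) (D:=0)); [ring|move=> t; rewrite HZ; ring].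
have E2 : forall Z p q r, Pi p q r Z -> pd i2 (Z i0) x y w = 0.
  move=> Z p0 q0 r0 HZ; rewrite pd2E (d1_poly (A:=p0 + q0*x + r0*x^+2) (B:=0) (C:=0) (D:=0)); [ring|move=> t; rewrite HZ; ring].
rewrite (E0 _ _ _ _ HX) (E0 _ _ _ _ HY) (E1 _ _ _ _ HX) (E1 _ _ _ _ HY) (E2 _ _ _ _ HX) (E2 _ _ _ _ HY).
rewrite HX HY; ring.
Qed.

Lemma Pi_sc k p q r X : Pi p q r X -> Pi (k * p) (k * q) (k * r) (sc k X).
Proof. by move=> H x y w; rewrite /sc H /vf0; ring. Qed.

Lemma Pi_sc_lie k p q r p' q' r' X Y : Pi p q r X -> Pi p' q' r' Y ->
  Pi (k * (p*q' - p'*q)) (k * (2*(p*r' - p'*r))) (k * (q*r' - q'*r)) (sc k (lie X Y)).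
Proof. move=> HX HY; exact: Pi_sc (Pi_lie HX HY). Qed.

Lemma Pi_shp a b c d u v al s : Pi a b c (shp a b c d u v al s).
Proof. by move=> x y w; rewrite /shp mk0. Qed.

Lemma gen_span (S : set (vf R)) Z : S Z -> Defs.span S Z.
Proof.
move=> HZ; exists [:: (1, Z)]; split.
  by move=> p; rewrite inE => /eqP ->.
by apply/funext=> i; apply/funext=> a; apply/funext=> b; apply/funext=> c; rewrite big_cons big_nil /= mul1r addr0.
Qed.

Lemma der_sc (J : set (vf R)) n k A B : derived J n A -> derived J n B ->
  derived J n.+1 (sc k (lie A B)).
Proof.
move=> HA HB; exists [:: (k, lie A B)]; split.
  by move=> p; rewrite inE => /eqP ->; exists A, B.
by apply/funext=> i; apply/funext=> a; apply/funext=> b; apply/funext=> c; rewrite big_cons big_nil /sc /vf0.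
Qed.

Lemma two_neq0 : (2:R) != 0. Proof. by rewrite pnatr_eq0. Qed.

Lemma maximal (J : set (vf R)) : is_ideal (@a13 R) J -> solvable J -> J `<=` @r13 R.
Proof.
move=> [[J0 Jcl] [JA Jlie]] [k Hk] X JX.
have [a [b [c [d [u [v [al [s [sa [ss EX]]]]]]]]]] := a13_ShA (JA X JX).
have PX : Pi a b c X by rewrite EX; exact: Pi_shp.
case: (boolP ((a == 0) && (b == 0) && (c == 0))) => [/andP [/andP [/eqP a0 /eqP b0] /eqP c0]| Hne].
  apply: Sh0_r13; exists d, u, v, al, s; by rewrite EX a0 b0 c0.
exfalso.
have Jsc : forall k Y, J Y -> J (sc k Y) by move=> k0 Y HY; exact: Jcl k0 Y _ HY J0.
have aP1 : @a13 R (@P1 R) by apply: gen_span; left.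
have aK : @a13 R (@Kf R) by apply: gen_span; right; right; left.
have PP1 : Pi 1 0 0 (@P1 R) by rewrite P1_shp; exact: Pi_shp.
have PK : Pi 0 0 1 (@Kf R) by rewrite K_shp; exact: Pi_shp.
have [W [JW PW]] : exists W, J W /\ Pi 1 0 0 W.
  have J1 : J (lie (@P1 R) X) := Jlie _ _ aP1 JX.
  have PY1 : Pi b (2*c) 0 (lie (@P1 R) X).
    by apply: (Pi_ext (Pi_lie PP1 PX)); ring.
  case: (eqVneq c 0) => [c0|cn0].
    case: (eqVneq b 0) => [b0|bn0].
      have an0 : a != 0 by move: Hne; rewrite b0 c0 eqxx !andbT.
      exists (sc a^-1 X); split; first exact: Jsc.
      apply: (Pi_ext (Pi_sc a^-1 PX)); [by rewrite mulVf|by rewrite b0 mulr0|by rewrite c0 mulr0].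
    exists (sc b^-1 (lie (@P1 R) X)); split; first exact: Jsc.
    apply: (Pi_ext (Pi_sc b^-1 PY1)); [by rewrite mulVf|by rewrite c0 mulr0 mulr0|by rewrite mulr0].
  have J2 : J (lie (@P1 R) (lie (@P1 R) X)) := Jlie _ _ aP1 J1.
  have c2 : 2 * c != 0 by rewrite mulf_neq0 // two_neq0.
  exists (sc (2*c)^-1 (lie (@P1 R) (lie (@P1 R) X))); split; first exact: Jsc.
  apply: (Pi_ext (Pi_sc_lie (2*c)^-1 PP1 PY1)).
  - by rewrite mul1r mulr0 subr0 mulVf.
  - ring.
  - ring.
have JW1 : J (sc (-2^-1) (lie (@Kf R) W)) by apply: Jsc; exact: Jlie.
have PW1 : Pi 0 1 0 (sc (-2^-1) (lie (@Kf R) W)).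
  apply: (Pi_ext (Pi_sc_lie (-2^-1) PK PW)); [ring| |ring].
  by field; rewrite ?pnatr_eq0.
have JW2 : J (sc (-1) (lie (@Kf R) (sc (-2^-1) (lie (@Kf R) W)))) by apply: Jsc; exact: Jlie.
have PW2 : Pi 0 0 1 (sc (-1) (lie (@Kf R) (sc (-2^-1) (lie (@Kf R) W)))).
  by apply: (Pi_ext (Pi_sc_lie (-1) PK PW1)); ring.
have ind : forall n, exists Y0 Y1 Y2, derived J n Y0 /\ derived J n Y1 /\ derived J n Y2 /\
    Pi 1 0 0 Y0 /\ Pi 0 1 0 Y1 /\ Pi 0 0 1 Y2.
  elim=> [|n [Y0 [Y1 [Y2 [D0 [D1' [D2' [H0 [H1 H2]]]]]]]]].
    by do 3 eexists; split; [exact: JW|split; [exact: JW1|split; [exact: JW2|split; [exact: PW|split; [exact: PW1|exact: PW2]]]]].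
  exists (sc 1 (lie Y0 Y1)), (sc 2^-1 (lie Y0 Y2)), (sc 1 (lie Y1 Y2)).
  split; [exact: der_sc|split; [exact: der_sc|split; [exact: der_sc|]]].
  split; [apply: (Pi_ext (Pi_sc_lie 1 H0 H1)); ring|split].
    apply: (Pi_ext (Pi_sc_lie 2^-1 H0 H2)); [ring| |ring].
    by field; rewrite ?pnatr_eq0.
  apply: (Pi_ext (Pi_sc_lie 1 H1 H2)); ring.
have [Y0 [_ [_ [D0 [_ [_ [H0 _]]]]]]] := ind k.
have := H0 0 0 0; rewrite (Hk _ D0) /vf0 mulr0 expr0n /= mulr0 !addr0 => /esym /eqP.
by rewrite oner_eq0.
Qed.

End S.

Theorem lemma1 (R : realType) : is_radical (@a13 R) (@r13 R).
Proof.
split; [exact: r13_ideal|split; [exact: r13_solvable|]].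
move=> J HJ SJ; exact: maximal.
Qed.
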